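(* Let $m$ be a positive integer and $p$ a prime such that $m\not\equiv 0\pmod 3$ and $p\equiv 1\pmod 3$. Then there is a constant $\beta>0$ such that for all sufficiently large $X$, \[ \#\{ n \leq X : p_{mp,p}(n)\equiv 1\pmod{2} \} \geq \beta \log\log X . \]
   Context: A partition $\lambda$ of a non-negative integer $n$ is a non-increasing sequence of positive integers (its parts) summing to $n$. For positive integers $A$ and $a$, $\mathrm{mex}_{A,a}(\lambda)$ denotes the smallest positive integer congruent to $a$ modulo $A$ that is not a part of $\lambda$. Then $p_{A,a}(n)$ denotes the number of partitions $\lambda$ of $n$ satisfying $\mathrm{mex}_{A,a}(\lambda)\equiv a \pmod{2A}$. Here $n$ ranges over positive integers. *)

(* Defs.v *)
From Stdlib Require Import Reals ZArith.
From mathcomp Require Import all_boot.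

Set Implicit Arguments.
Unset Strict Implicit.
Unset Printing Implicit Defensive.

Definition is_partition (n : nat) (l : seq nat) : bool :=
  [&& sorted geq l, all (fun x => 0 < x) l & sumn l == n].

Fixpoint lists_len (k : nat) (vals : seq nat) : seq (seq nat) :=
  match k with
  | 0 => [:: [::]]
  | k'.+1 => [seq x :: t | x <- vals, t <- lists_len k' vals]
  end.

(* A duplicate-free list of candidate sequences containing every partition of n:
   all lists of length <= n with entries in {1,...,n}. *)
Definition candidates (n : nat) : seq (seq nat) :=
  flatten [seq lists_len k (iota 1 n) | k <- iota 0 n.+1].

(* mex_{A,a}(l): the smallest positive integer k with k = a (mod A) that is not a part
   of l.  For A, a > 0, the integer B := a + A * (sumn l + 1) is positive, is = a mod A
   and exceeds every part, so the smallest such k lies in {1,...,B}. *)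
Definition mex (A a : nat) (l : seq nat) : nat :=
  let B := a + A * (sumn l).+1 in
  head 0 [seq k <- iota 1 B | (k == a %[mod A]) && (k \notin l)].

Definition p_mex (A a n : nat) : nat :=
  count (fun l => is_partition n l && (mex A a l == a %[mod 2 * A])) (candidates n).

Definition odd_count (A a : nat) (X : R) : nat :=
  count (fun n => odd (p_mex A a n)) (iota 1 (Z.to_nat (Int_part X))).

(* Main.v *)
Require Import Defs.
From Stdlib Require Import Reals ZArith.
From mathcomp Require Import all_boot.
From mathcomp Require Import ssralg poly zmodp ring zify.
From Stdlib Require Import Lra.
Set Implicit Arguments. Unset Strict Implicit. Unset Printing Implicit Defensive.

Lemma geq_trans' : transitive geq.
Proof. move=> x y z /= h1 h2; exact: leq_trans h2 h1. Qed.
Lemma geq_total' : total geq.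
Proof. move=> x y /=; exact: leq_total. Qed.
Lemma geq_anti' : antisymmetric geq.
Proof. move=> x y /andP[/= h1 h2]; apply/anti_leq; by rewrite h1 h2. Qed.

Fixpoint pf (fuel k n : nat) : seq (seq nat) :=
  match fuel with
  | 0 => [::]
  | f.+1 => match k with
            | 0 => if n == 0 then [:: [::]] else [::]
            | k'.+1 => pf f k' n ++
                (if k'.+1 <= n then map (cons k'.+1) (pf f k'.+1 (n - k'.+1)) else [::])
            end
  end.
Definition parts k n := pf (k + n).+1 k n.
Definition okp k n (l : seq nat) := [&& sorted geq l, all (fun x => 0 < x <= k) l & sumn l == n].

Lemma okp_cons k n x l : okp k n (x :: l) =
  [&& all (fun y => y <= x) l, sorted geq l, 0 < x <= k, all (fun y => 0 < y <= k) l
    & x + sumn l == n].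
Proof.
rewrite /okp /= (path_sortedE geq_trans').
by rewrite -!andbA; congr (_ && _); rewrite andbCA.
Qed.

Lemma mem_pf f k n l : k + n < f -> (l \in pf f k n) = okp k n l.
Proof.
elim: f k n l => [//|f IH] [|k] n l /= hf.
- rewrite /okp; case: l => [|x l] /=.
  + by case: n hf.
  + rewrite (_ : (0 < x <= 0) = false) ?andFb ?andbF; last by case: x.
    by case: (n == 0).
- rewrite mem_cat IH; last by lia.
  apply/idP/idP.
  + case/orP.
    * case: l => [//|x l]; rewrite !okp_cons => /and5P[h1 h2 /andP[h3 h4] h5 h6].
      rewrite h1 h2 h3 (leq_trans h4) // h6 andbT /=.
      rewrite andbT; apply: (sub_all _ h5) => y /andP[-> h]; by rewrite ltnW.
    * case hk : (k < n); last by [].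
      move=> /mapP [l' hl' ->].
      rewrite IH in hl'; last by lia.
      rewrite okp_cons; move: hl'; rewrite /okp => /and3P[h1 h2 /eqP h3].
      rewrite h1 h2 /= leqnn h3 subnKC //.
      rewrite eqxx !andbT; by apply: (sub_all _ h2) => y /andP[_].
  + case: l => [|x l].
    * by rewrite /okp /= => /eqP <-; rewrite orbF.
    * rewrite okp_cons => /and5P[h1 h2 /andP[h3 h4] h5 /eqP h6].
      case: (ltnP x k.+1) => hx.
      - apply/orP; left; rewrite okp_cons h1 h2 h3 h6 eqxx.
        rewrite ltnS in hx; rewrite hx /= andbT.
        apply/allP => y hy; move/allP: h5 => /(_ y hy) /andP[-> _] /=.
        move/allP: h1 => /(_ y hy) hyx; exact: leq_trans hyx _.
      - have ex : x = k.+1 by apply/eqP; rewrite eqn_leq h4 hx.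
        subst x; apply/orP; right.
        have hk : k.+1 <= n by rewrite -h6 leq_addr.
        rewrite hk; apply/mapP; exists l => //.
        rewrite IH; last by lia.
        by rewrite /okp h2 h5 -h6 addKn eqxx.
Qed.

Lemma uniq_pf f k n : k + n < f -> uniq (pf f k n).
Proof.
elim: f k n => [//|f IH] [|k] n /= hf.
- by case: (n == 0).
- rewrite cat_uniq IH; last by lia.
  case hk : (k < n) => /=; last by [].
  rewrite /= map_inj_uniq; last by move=> x y [].
  apply/andP; split; last by apply: IH; lia.
  apply/hasPn => l /mapP [l' _ ->].
  rewrite /= mem_pf; last by lia.
  by rewrite okp_cons ltnn /= !andbF.
Qed.

Lemma mem_parts k n l : (l \in parts k n) = okp k n l.
Proof. by rewrite /parts mem_pf. Qed.
Lemma uniq_parts k n : uniq (parts k n).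
Proof. by rewrite /parts uniq_pf. Qed.

Lemma pf_fuel f f' k n : k + n < f -> k + n < f' -> pf f k n = pf f' k n.
Proof.
elim: f f' k n => [//|f IH] [//|f'] [|k] n /= hf hf' //.
rewrite (IH f'); last 2 first; [lia|lia|].
case: ifP => hk //; rewrite (IH f') //; lia.
Qed.

Lemma parts0 n : parts 0 n = if n == 0 then [:: [::]] else [::].
Proof. by []. Qed.

Lemma partsS k n : parts k.+1 n = parts k n ++
  (if k.+1 <= n then map (cons k.+1) (parts k.+1 (n - k.+1)) else [::]).
Proof.
rewrite {1}/parts.
have -> : pf (k.+1 + n).+1 k.+1 n = pf (k.+1+n) k n ++ (if k.+1 <= n then
   map (cons k.+1) (pf (k.+1+n) k.+1 (n - k.+1)) else [::]) by [].
rewrite (pf_fuel (f' := (k + n).+1)); [|lia|lia].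
case: ifP => hk //; rewrite (pf_fuel (k := k.+1) (f' := (k.+1 + (n - k.+1)).+1)) //; lia.
Qed.

Lemma leq_mem_sumn (l : seq nat) x : x \in l -> x <= sumn l.
Proof.
elim: l => [//|y l IH]; rewrite inE => /orP[/eqP -> /=|/IH h /=]; first exact: leq_addr.
exact: leq_trans h (leq_addl _ _).
Qed.

Lemma size_le_sumn (l : seq nat) : all (fun x => 0 < x) l -> size l <= sumn l.
Proof. elim: l => [//|y l IH] /= /andP[hy /IH h]; rewrite -addn1 addnC; exact: leq_add. Qed.

Lemma okp_part n l : okp n n l = is_partition n l.
Proof.
rewrite /okp /is_partition; case hs: (sumn l == n); rewrite ?andbF ?andbT //.
congr (_ && _); apply: eq_in_all => x hx; move/eqP: hs => <-.
by rewrite leq_mem_sumn // andbT.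
Qed.

Lemma mem_lists_len k (vals l : seq nat) :
  (l \in lists_len k vals) = (size l == k) && all (fun x => x \in vals) l.
Proof.
elim: k l => [|k IH] [|x l] //=.
- by apply/negbTE/negP => /allpairsP [[y t] /= [_ _ ]].
- apply/allpairsP/idP => [[[y t] /= [hy ht [-> ->]]]|/andP[/eqP[hs] /andP[hx hl]]].
    by move: ht; rewrite IH => /andP[/eqP -> ->]; rewrite hy eqxx.
  by exists (x, l); rewrite /= IH hs eqxx hl hx.
Qed.

Lemma uniq_lists_len k (vals : seq nat) : uniq vals -> uniq (lists_len k vals).
Proof.
move=> uv; elim: k => [//|k IH] /=.
by apply: allpairs_uniq => // -[x t] [y u] _ _ /= [-> ->].
Qed.

Lemma mem_candidates n l :
  (l \in candidates n) = (size l <= n) && all (fun x => x \in iota 1 n) l.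
Proof.
apply/flatten_mapP/idP => [[k hk hl]|/andP[hs ha]].
  move: hl; rewrite mem_lists_len => /andP[/eqP hs ->]; rewrite andbT hs.
  by move: hk; rewrite mem_iota add0n ltnS.
exists (size l); first by rewrite mem_iota add0n ltnS.
by rewrite mem_lists_len eqxx ha.
Qed.

Lemma uniq_candidates n : uniq (candidates n).
Proof.
rewrite /candidates; elim: (iota 0 n.+1) (iota_uniq 0 n.+1) => //= k ks IH /andP[nk uks].
rewrite cat_uniq uniq_lists_len ?iota_uniq // IH // andbT /=.
apply/hasPn => l /flatten_mapP [k' hk' hl]; rewrite mem_lists_len.
move: hl; rewrite mem_lists_len => /andP[/eqP e1 _]; apply/negP => /andP[/eqP e _].
by move: nk; rewrite -e e1 hk'.
Qed.

Lemma count_candidates n (Q : pred (seq nat)) :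
  count (fun l => is_partition n l && Q l) (candidates n) = count Q (parts n n).
Proof.
have -> : count (fun l => is_partition n l && Q l) (candidates n) =
   count Q (filter (is_partition n) (candidates n)).
  by rewrite count_filter; apply: eq_count => l /=; rewrite andbC.
apply/permP; apply: uniq_perm; first by rewrite filter_uniq // uniq_candidates.
  exact: uniq_parts.
move=> l; rewrite mem_filter mem_parts okp_part.
case hp: (is_partition n l) => //=; rewrite mem_candidates.
move: hp; rewrite /is_partition => /and3P[_ hpos /eqP hs].
rewrite -{1}hs size_le_sumn //=; apply/allP => x hx; rewrite mem_iota add1n ltnS -hs leq_mem_sumn // andbT.
by move/allP: hpos => /(_ x hx).
Qed.

Definition idx A a (l : seq nat) := find (fun i => a + i * A \notin l) (iota 0 (sumn l).+1).

Lemma idx_props A a l : 0 < a -> 0 < A ->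
  [/\ idx A a l <= sumn l, a + idx A a l * A \notin l &
      forall i, i < idx A a l -> a + i * A \in l].
Proof.
move=> ha hA.
have hh : has (fun i => a + i * A \notin l) (iota 0 (sumn l).+1).
  apply/hasP; exists (sumn l); first by rewrite mem_iota leq0n add0n ltnSn.
  apply/negP => /leq_mem_sumn; rewrite leqNgt; move/negP; apply.
  by rewrite -addn1 addnC; apply: leq_add => //; rewrite leq_pmulr.
have hf := hh; rewrite has_find size_iota in hf.
split.
- by rewrite -ltnS.
- by have := nth_find 0 hh; rewrite nth_iota.
- move=> i hi; have := before_find 0 hi; rewrite nth_iota ?add0n; last exact: ltn_trans hi hf.
  by move/negbFE.
Qed.

Lemma head_filter_iota (P : pred nat) s L x : s <= x < s + L -> P x ->
  (forall y, s <= y < x -> ~~ P y) -> head 0 (filter P (iota s L)) = x.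
Proof.
elim: L s => [|L IH] s /=; first by rewrite addn0 => /andP[h1 h2]; move: (leq_ltn_trans h1 h2); rewrite ltnn.
move=> /andP[h1 h2] px hy.
case: (ltngtP s x) h1 => // [hsx|e] _; last by rewrite e px.
have -> : P s = false by apply/negbTE/hy; rewrite leqnn hsx.
apply: IH => //; first by rewrite hsx /= addSnnS.
by move=> y /andP[hy1 hy2]; apply: hy; rewrite hy2 ltnW.
Qed.

Lemma mex_idx A a l : 0 < a -> a <= A -> mex A a l = a + idx A a l * A.
Proof.
move=> ha haA; have hA : 0 < A := leq_trans ha haA.
have [i1 i2 i3] := idx_props l ha hA.
rewrite /mex; apply: head_filter_iota.
- apply/andP; split; first by rewrite (leq_trans ha) // leq_addr.
  rewrite add1n ltnS leq_add2l mulnC leq_mul2l; apply/orP; right; exact: ltnW.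
- by rewrite i2 andbT addnC modnMDl.
- move=> y /andP[hy1 hy2]; apply/negP => /andP[hy /negP hyl]; apply: hyl.
  have hay : a <= y.
    rewrite leqNgt; apply/negP => hya.
    have hyA : y < A := leq_trans hya haA.
    move: hy; rewrite (modn_small hyA).
    have [haA'|eaA] : a < A \/ a = A by lia.
      by rewrite (modn_small haA') => /eqP e; move: hya; rewrite e ltnn.
    by rewrite eaA modnn => /eqP e; move: hy1; rewrite e.
  move: hy; rewrite eqn_mod_dvd // => /dvdnP [q hq].
  have -> : y = a + q * A by rewrite -hq subnKC.
  apply: i3; rewrite -(ltn_pmul2r hA) -(ltn_add2l a) -hq subnKC //.
Qed.

Lemma mexcond A a l : 0 < a -> a <= A ->
  (mex A a l == a %[mod 2 * A]) = ~~ odd (idx A a l).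
Proof.
move=> ha haA; have hA : 0 < A := leq_trans ha haA.
rewrite mex_idx //.
set i := idx A a l.
have -> : a + i * A = i./2 * (2 * A) + (a + odd i * A).
  rewrite -{1}(odd_double_half i) -muln2; lia.
rewrite modnMDl; case: (odd i) => /=; last by rewrite mul0n addn0 eqxx.
rewrite mul1n eqn_mod_dvd ?leq_addr // addKn; apply/negP => /dvdn_leq.
by rewrite hA => /(_ isT); rewrite leqNgt mulnC -{1}(muln1 A) ltn_pmul2l.
Qed.

Lemma count_sum (T : Type) (P : pred T) (s : seq T) : count P s = \sum_(x <- s) (P x : nat).
Proof. by elim: s => [|x s IH]; rewrite ?big_nil ?big_cons //= IH. Qed.

Lemma odd_count_idx A a (s : seq (seq nat)) :
  odd (count (fun l => ~~ odd (idx A a l)) s) = odd (\sum_(l <- s) (idx A a l).+1).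
Proof.
elim: s => [|x s IH]; rewrite ?big_nil ?big_cons //= !oddD IH /=.
move: (odd (\sum_(l <- s) (idx A a l).+1)) => b; by case: b; case: (odd (idx A a x)).
Qed.

Definition V A a k := [seq a + i * A | i <- iota 0 k].

Lemma allV A a l k : 0 < a -> 0 < A ->
  all (fun x => x \in l) (V A a k) = (k <= idx A a l).
Proof.
move=> ha hA; have [i1 i2 i3] := idx_props l ha hA.
rewrite all_map; apply/allP/idP => [h|h i].
- rewrite leqNgt; apply/negP => hk; move/negP: i2; apply.
  by have := h (idx A a l); rewrite mem_iota /= => ->.
- by rewrite mem_iota /= => hi; apply: i3; exact: leq_trans hi h.
Qed.

Lemma sum_le_min K m : \sum_(k < K) (k <= m : nat) = minn K m.+1.
Proof.
elim: K => [|K IH]; first by rewrite big_ord0.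
rewrite big_ord_recr /= IH; case: (leqP K m) => h /=; lia.
Qed.

Lemma pmex_sum A a n K : 0 < a -> a <= A -> n < K ->
  odd (p_mex A a n) =
  odd (\sum_(k < K) count (fun l => all (fun x => x \in l) (V A a k)) (parts n n)).
Proof.
move=> ha haA hK; have hA : 0 < A := leq_trans ha haA.
rewrite /p_mex count_candidates.
rewrite (eq_count (a2 := fun l => ~~ odd (idx A a l))); last by move=> l; rewrite mexcond.
rewrite odd_count_idx; congr odd; symmetry.
rewrite (eq_bigr (fun k : 'I_K => \sum_(l <- parts n n) (all (fun x => x \in l) (V A a k) : nat))); last by move=> k _; rewrite count_sum.
rewrite exchange_big /=; apply: eq_big_seq => l; rewrite mem_parts okp_part => hl.
under eq_bigr => k _ do rewrite allV //.
rewrite sum_le_min; have [i1 _ _] := idx_props l ha hA.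
move: hl; rewrite /is_partition => /and3P[_ _ /eqP hs].
apply/minn_idPr; rewrite hs in i1; exact: leq_ltn_trans i1 hK.
Qed.

Lemma ex_rem (W l : seq nat) : uniq W -> {subset W <= l} -> exists mu, perm_eq l (W ++ mu).
Proof.
elim: W l => [|x W IH] l /=; first by move=> _ _; exists l.
move=> /andP[hx hW] hsub.
have xl : x \in l by apply: hsub; rewrite inE eqxx.
have [mu hmu] : exists mu, perm_eq (rem x l) (W ++ mu).
  apply: IH => // y hy; apply: rem_mem; first by apply/negP => /eqP e; move: hx; rewrite -e hy.
  by apply: hsub; rewrite inE hy orbT.
exists mu; apply: (perm_trans (perm_to_rem xl)); by rewrite perm_cons.
Qed.

Lemma sort_perm (s : seq nat) : perm_eq (sort geq s) s.
Proof. by rewrite perm_sort. Qed.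

Lemma perm_sortr (s t : seq nat) : perm_eq s t -> perm_eq s (sort geq t).
Proof. by move=> h; rewrite perm_sym perm_sort perm_sym. Qed.

Lemma is_part_sort (W mu : seq nat) m : all (fun x => 0 < x) W -> is_partition m mu ->
  is_partition (sumn W + m) (sort geq (W ++ mu)).
Proof.
move=> hW /and3P[_ hmu /eqP hs].
have hp : perm_eq (sort geq (W ++ mu)) (W ++ mu) by rewrite perm_sort.
rewrite /is_partition sort_sorted /=; last exact: geq_total'.
by rewrite (perm_all _ hp) all_cat hW hmu (perm_sumn hp) sumn_cat hs eqxx.
Qed.

Lemma count_contains (W : seq nat) n : uniq W -> all (fun x => 0 < x) W ->
  count (fun l => all (fun x => x \in l) W) (parts n n) =
  if sumn W <= n then size (parts (n - sumn W) (n - sumn W)) else 0.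
Proof.
move=> uW pW.
have split_l : forall lam, is_partition n lam -> all (fun x => x \in lam) W ->
    exists mu, is_partition (n - sumn W) mu /\ lam = sort geq (W ++ mu) /\ sumn W <= n.
  move=> lam /and3P[hs hpos /eqP hsum] hc.
  have [mu0 hmu0] := ex_rem uW (allP hc).
  have e1 : sumn lam = sumn W + sumn mu0 by rewrite (perm_sumn hmu0) sumn_cat.
  exists (sort geq mu0); split; last split.
  - rewrite /is_partition sort_sorted; last exact: geq_total'.
    rewrite (perm_all _ (sort_perm mu0)) (perm_sumn (sort_perm mu0)).
    move: hpos; rewrite (perm_all _ hmu0) all_cat => /andP[_ ->] /=.
    by rewrite -hsum e1 addKn.
  - apply: (sorted_eq geq_trans' geq_anti' hs); first by apply: sort_sorted; exact: geq_total'.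
    apply: perm_sortr; apply: (perm_trans hmu0); rewrite perm_cat2l.
    by rewrite perm_sym perm_sort.
  - by rewrite -hsum e1 leq_addr.
case: ifP => hW.
- set m := n - sumn W.
  pose f := fun mu => sort geq (W ++ mu).
  rewrite -size_filter -(size_map f); apply/perm_size/uniq_perm.
  + by rewrite filter_uniq // uniq_parts.
  + rewrite map_inj_in_uniq ?uniq_parts // => mu1 mu2.
    rewrite !mem_parts !okp_part => /and3P[s1 _ _] /and3P[s2 _ _] /= e.
    apply: (sorted_eq geq_trans' geq_anti' s1 s2).
    rewrite -(perm_cat2l W); apply: (perm_trans (y := sort geq (W ++ mu1))).
      by rewrite perm_sym perm_sort.
    by rewrite /f in e; rewrite e perm_sort.
  + move=> lam; rewrite mem_filter mem_parts okp_part; apply/andP/mapP.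
    * move=> [hc hl]; have [mu [h1 [h2 _]]] := split_l lam hl hc.
      by exists mu => //; rewrite mem_parts okp_part.
    * move=> [mu]; rewrite mem_parts okp_part => hmu ->; split.
      - by apply/allP => x hx; rewrite mem_sort mem_cat hx.
      - by have := is_part_sort pW hmu; rewrite subnKC.
- apply/eqP; rewrite -leqn0 leqNgt -has_count; apply/hasPn => lam.
  rewrite mem_parts okp_part => hl; apply/negP => hc.
  by have [mu [_ [_ h]]] := split_l lam hl hc; rewrite h in hW.
Qed.

Definition pa j := j * j + 'C(j, 2).
Definition pb j := j * j + 'C(j.+1, 2).

Definition pcn n m := ((m == 0) + count (fun j => pa j == m) (iota 1 n) +
  count (fun j => pb j == m) (iota 1 n))%N.
Definition Pk k i := size (parts k i).

Section Alg.
Import GRing.Theory.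
Local Open Scope ring_scope.

Definition Qp (R : comRingType) n k : {poly R} := \prod_(k <= i < n) (1 - 'X^(i.+1)).
Definition Sp (R : comRingType) n : {poly R} :=
  \sum_(0 <= k < n.+1) (-1) ^+ k * 'X^(n * k + 'C(k.+1, 2)) * Qp R n k.
Fixpoint Pnp (R : comRingType) n : {poly R} :=
  match n with 0 => 1 | n'.+1 => Pnp R n' + (-1) ^+ n * ('X^(pa n) + 'X^(pb n)) end.

Lemma QpS (R : comRingType) n k : (k <= n)%N -> Qp R n.+1 k = Qp R n k * (1 - 'X^(n.+1)).
Proof. by move=> h; rewrite /Qp big_nat_recr. Qed.
Lemma Qpl (R : comRingType) n k : (k < n)%N -> Qp R n k = (1 - 'X^(k.+1)) * Qp R n k.+1.
Proof. by move=> h; rewrite /Qp big_ltn. Qed.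
Lemma Qpnn (R : comRingType) n : Qp R n n = 1.
Proof. by rewrite /Qp big_geq. Qed.

Lemma Sp_Pnp (R : comRingType) n : Sp R n = Pnp R n.
Proof.
elim: n => [|n IH].
  by rewrite /Sp big_nat1 Qpnn expr0 mul1r mulr1 muln0 add0n bin_small // expr0.
rewrite /= -IH /Sp big_nat_recr //= Qpnn mulr1.
pose B k := if k is k'.+1 then (-1) ^+ k * 'X^(n * k' + 'C(k'.+1, 2) + k' + n.+1) * Qp R n k'
            else 0 : {poly R}.
have hB : forall k, (k <= n)%N ->
   B k = (-1) ^+ k * 'X^(n * k + 'C(k.+1, 2)) * (1 - 'X^k) * Qp R n k.
  case=> [|k] hk /=; first by rewrite expr0 subrr !mulr0 mul0r.
  rewrite (@Qpl _ n k hk) !mulrA; congr (_ * _); rewrite -!mulrA; congr (_ * _).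
  congr ('X^_ * _); rewrite [in RHS]binS bin1 mulnS; lia.
have ht : forall k, (k <= n)%N ->
   (-1) ^+ k * 'X^(n.+1 * k + 'C(k.+1, 2)) * Qp R n.+1 k -
   (-1) ^+ k * 'X^(n * k + 'C(k.+1, 2)) * Qp R n k = B k.+1 - B k.
  move=> k hk; rewrite (hB k hk) (@QpS R n k hk).
  have -> : B k.+1 = (-1)^+k.+1 * 'X^(n * k + 'C(k.+1, 2) + k + n.+1) * Qp R n k by [].
  have -> : (n.+1 * k + 'C(k.+1, 2) = (n * k + 'C(k.+1, 2)) + k)%N by rewrite mulSn; lia.
  set e := (n * k + 'C(k.+1, 2))%N.
  clearbody e; rewrite !exprD !exprS; ring.
have -> : \sum_(0 <= i < n.+1) (-1) ^+ i * 'X^(n.+1 * i + 'C(i.+1, 2)) * Qp R n.+1 i =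
   \sum_(0 <= i < n.+1) (B i.+1 - B i) + \sum_(0 <= i < n.+1) (-1) ^+ i * 'X^(n * i + 'C(i.+1, 2)) * Qp R n i.
  rewrite -big_split /=; apply: eq_big_nat => i /andP[_ hi].
  by rewrite -ht // subrK.
rewrite telescope_sumr // /B Qpnn mulr1 subr0.
rewrite /pa /pb (_ : (n * n + 'C(n.+1, 2) + n + n.+1 = n.+1 * n.+1 + 'C(n.+1, 2))%N); last first.
  by rewrite mulSn mulnS; lia.
rewrite mulrDr; ring.
Qed.


Lemma coef_Qp_Sp (R : comRingType) n m : (m <= n)%N -> (Qp R n 0)`_m = (Sp R n)`_m.
Proof.
move=> hm; rewrite /Sp big_ltn // muln0 add0n bin_small // expr0 !mul1r coefD coef_sum.
rewrite big1_seq ?addr0 // => k /andP[_]; rewrite mem_iota => /andP[hk _].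
rewrite [(-1) ^+ k * _]mulrC -mulrA coefXnM ifT //.
have : (m < n * k + 'C(k.+1, 2))%N by rewrite binS bin1; nia.
by [].
Qed.

Lemma m1Z2 : (-1 : {poly 'Z_2}) = 1.
Proof. by rewrite -polyCN -polyC1; congr (_%:P); apply/val_inj. Qed.

Lemma coef_Pnp_Z2 n m : (Pnp 'Z_2 n)`_m = (pcn n m)%:R.
Proof.
elim: n => [|n IH]; first by rewrite /= coef1 /pcn /= !addn0.
have hi : iota 1 n.+1 = iota 1 n ++ [:: n.+1] by rewrite -[in LHS](addn1 n) iotaD add1n.
rewrite /= coefD IH m1Z2 expr1n mul1r coefD !coefXn /pcn hi !count_cat /=.
rewrite !addn0 !natrD [pa _ == m]eq_sym [pb _ == m]eq_sym.
ring.
Qed.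

Definition conv (R : comRingType) (f g : nat -> R) n := \sum_(0 <= i < n.+1) f i * g (n - i)%N.
Definition shift (R : comRingType) c (f : nat -> R) i := if (c <= i)%N then f (i - c)%N else 0.

Lemma conv_ext (R : comRingType) (f f' g g' : nat -> R) n :
  (forall i, f i = f' i) -> (forall i, g i = g' i) -> conv f g n = conv f' g' n.
Proof. by move=> hf hg; apply: eq_bigr => i _; rewrite hf hg. Qed.

Lemma conv_sym (R : comRingType) (f g : nat -> R) n : conv f g n = conv g f n.
Proof.
rewrite /conv big_nat_rev /=; apply: eq_big_nat => i /andP[_ hi].
by rewrite add0n subSS subKn // mulrC.
Qed.

Lemma conv_shiftr (R : comRingType) (f g : nat -> R) c n :
  conv f (shift c g) n = if (c <= n)%N then conv f g (n - c)%N else 0.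
Proof.
rewrite /conv /shift; case: ifP => hc.
- rewrite (big_cat_nat _ (n := (n - c).+1)) //=; last by rewrite ltnS leq_subr.
  rewrite [X in _ + X]big1_seq ?addr0 => [|i]; last first.
    rewrite mem_iota => /andP[h1 h2]; rewrite ifF ?mulr0 //; apply/negbTE; rewrite -ltnNge; lia.
  apply: eq_big_nat => i /andP[_ hi]; rewrite ifT; last by lia.
  by congr (_ * g _); lia.
- rewrite big1_seq // => i; rewrite mem_iota => /andP[h1 h2]; rewrite ifF ?mulr0 //.
  apply/negbTE; rewrite -ltnNge; lia.
Qed.

Lemma conv_shiftl (R : comRingType) (f g : nat -> R) c n :
  conv (shift c f) g n = if (c <= n)%N then conv f g (n - c)%N else 0.
Proof. by rewrite conv_sym conv_shiftr conv_sym. Qed.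

Lemma conv_addl (R : comRingType) (f1 f2 g : nat -> R) n :
  conv (fun i => f1 i + f2 i) g n = conv f1 g n + conv f2 g n.
Proof. by rewrite /conv -big_split; apply: eq_bigr => i _; rewrite mulrDl. Qed.

Lemma conv_subr (R : comRingType) (f g1 g2 : nat -> R) n :
  conv f (fun i => g1 i - g2 i) n = conv f g1 n - conv f g2 n.
Proof. by rewrite /conv -sumrB; apply: eq_bigr => i _; rewrite mulrBr. Qed.

Lemma conv_PE (R : comRingType) k n :
  conv (fun i => (Pk k i)%:R) (fun m => (Qp R k 0)`_m) n = (n == 0)%:R :> R.
Proof.
elim: k n => [|k IH] n.
  rewrite /conv big_ltn // subn0 /Pk parts0 /= Qpnn coef1 mul1r big1_seq ?addr0 // => i.
  rewrite mem_iota; case: i => [|i] //= _.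
  by rewrite ?mul0r.
have hP : forall i, (Pk k.+1 i)%:R = (Pk k i)%:R + shift k.+1 (fun i => (Pk k.+1 i)%:R) i :> R.
  move=> i; rewrite /Pk partsS size_cat /shift; case: ifP => h /=; first by rewrite size_map natrD.
  by rewrite addn0 addr0.
have hE : forall m, (Qp R k.+1 0)`_m = (Qp R k 0)`_m - shift k.+1 (fun m => (Qp R k 0)`_m) m.
  move=> m; rewrite QpS // mulrBr mulr1 coefB coefMXn /shift ltnNge.
  by case: (k < m).
rewrite (conv_ext n (fun i => erefl) hE) conv_subr conv_shiftr.
rewrite (conv_ext n hP (fun i => erefl)) conv_addl IH conv_shiftl.
by case: ifP => _; rewrite ?addrK ?addr0 ?subr0.
Qed.

End Alg.

Definition pc m := pcn m m.

Lemma okp_part' k n l : n <= k -> okp k n l = is_partition n l.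
Proof.
move=> hk; rewrite /okp /is_partition; case hs: (sumn l == n); rewrite ?andbF ?andbT //.
congr (_ && _); apply: eq_in_all => x hx; move/eqP: hs => hs.
by rewrite (leq_trans _ hk) ?andbT // -hs leq_mem_sumn.
Qed.

Lemma Pk_eq k i : i <= k -> Pk k i = Pk i i.
Proof.
move=> hk; apply/perm_size/uniq_perm; rewrite ?uniq_parts // => l.
by rewrite !mem_parts okp_part' // okp_part.
Qed.

Lemma pa_ge j : j <= pa j.
Proof. rewrite /pa; case: j => // j; nia. Qed.
Lemma pb_ge j : j <= pb j.
Proof. rewrite /pb; case: j => // j; nia. Qed.

Lemma pcn_eq n m : m <= n -> pcn n m = pc m.
Proof.
move=> hm; rewrite /pc /pcn.
have -> : iota 1 n = iota 1 m ++ iota (1 + m) (n - m) by rewrite -iotaD subnKC.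
rewrite !count_cat.
have h0 : forall f : nat -> nat, (forall j, j <= f j) ->
    count (fun j => f j == m) (iota (1 + m) (n - m)) = 0.
  move=> f hf; apply/eqP; rewrite -leqn0 leqNgt -has_count; apply/hasPn => j.
  rewrite mem_iota => /andP[h1 _]; apply/negP => /eqP e.
  by have := hf j; rewrite e leqNgt -add1n h1.
by rewrite (h0 _ pa_ge) (h0 _ pb_ge) !addn0.
Qed.

Lemma natZ2 x : nat_of_ord (x%:R : 'Z_2)%R = odd x.
Proof. by rewrite val_Zp_nat // modn2. Qed.

Lemma Z2_odd x y : (x%:R : 'Z_2)%R = (y%:R)%R -> odd x = odd y.
Proof. move=> e; have := natZ2 x; rewrite e natZ2; by case: (odd x); case: (odd y). Qed.

Lemma Z2_nat x : (x%:R : 'Z_2)%R = ((odd x : nat)%:R)%R.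
Proof. by apply/val_inj; rewrite /= !natZ2 oddb. Qed.

Section Fin.
Import GRing.Theory.
Local Open Scope ring_scope.

Lemma euler_Z2 u : conv (fun i => (Pk i i)%:R : 'Z_2) (fun m => (pc m)%:R) u = (u == 0)%:R.
Proof.
rewrite -(conv_PE 'Z_2 u u).
apply: eq_big_nat => i /andP[_ hi].
have hiu : (i <= u)%N by [].
rewrite (Pk_eq hiu).
rewrite coef_Qp_Sp ?leq_subr //.
rewrite Sp_Pnp coef_Pnp_Z2 pcn_eq //.
exact: leq_subr.
Qed.
Lemma conv_suml (R : comRingType) K (F : nat -> nat -> R) (g : nat -> R) n :
  conv (fun i => \sum_(k < K) F k i) g n = \sum_(k < K) conv (F k) g n.
Proof.
rewrite /conv; under eq_bigr => i _ do rewrite mulr_suml.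
by rewrite exchange_big.
Qed.

Lemma conv_ext_le (R : comRingType) (f f' g : nat -> R) n :
  (forall i, (i <= n)%N -> f i = f' i) -> conv f g n = conv f' g n.
Proof. by move=> h; apply: eq_big_nat => i /andP[_ hi]; rewrite h. Qed.

Lemma V_uniq A a k : (0 < A)%N -> uniq (V A a k).
Proof.
move=> hA; rewrite map_inj_uniq ?iota_uniq // => i j /addnI /eqP.
by rewrite eqn_pmul2r // => /eqP.
Qed.

Lemma V_pos A a k : (0 < a)%N -> all (fun x => 0 < x)%N (V A a k).
Proof. by move=> ha; rewrite all_map; apply/allP => i _ /=; rewrite ltn_addr. Qed.

Lemma pm_Z2 A a i K : (0 < a)%N -> (a <= A)%N -> (i < K)%N ->
  (p_mex A a i)%:R = \sum_(k < K) shift (sumn (V A a k)) (fun j => (Pk j j)%:R) i :> 'Z_2.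
Proof.
move=> ha haA hK; have hA : (0 < A)%N := leq_trans ha haA.
rewrite Z2_nat (pmex_sum ha haA hK) -Z2_nat natr_sum; apply: eq_bigr => k _.
rewrite count_contains ?V_uniq ?V_pos // /shift; by case: ifP.
Qed.

Lemma main_Z2 A a t : (0 < a)%N -> (a <= A)%N ->
  conv (fun i => (p_mex A a i)%:R : 'Z_2) (fun m => (pc m)%:R) t =
  (count (fun k => sumn (V A a k) == t) (iota 0 t.+2))%:R.
Proof.
move=> ha haA.
rewrite (conv_ext_le (f' := fun i => \sum_(k < t.+2) shift (sumn (V A a k)) (fun j => (Pk j j)%:R) i)); last first.
  move=> i hi; apply: pm_Z2 => //; rewrite ltnS; exact: leqW.
rewrite (@conv_suml _ t.+2 (fun k i => shift (sumn (V A a k)) (fun j => (Pk j j)%:R : 'Z_2) i)).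
rewrite count_sum natr_sum.
have -> : \sum_(x <- iota 0 t.+2) (((sumn (V A a x) == t) : nat)%:R : 'Z_2) =
  \sum_(k < t.+2) ((sumn (V A a k) == t) : nat)%:R.
  by rewrite -(big_mkord xpredT (fun x => (((sumn (V A a x) == t) : nat)%:R : 'Z_2))) /index_iota subn0.
apply: eq_bigr => k _; rewrite conv_shiftl euler_Z2.
case: ltngtP => h.
- by rewrite subn_eq0 leqNgt h.
- by [].
- by rewrite h subnn.
Qed.

Lemma main_odd A a t : (0 < a)%N -> (a <= A)%N ->
  odd (\sum_(0 <= i < t.+1) p_mex A a i * pc (t - i))%N =
  odd (count (fun k => sumn (V A a k) == t) (iota 0 t.+2)).
Proof.
move=> ha haA; apply: Z2_odd; rewrite -main_Z2 // natr_sum /conv.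
by apply: eq_bigr => i _; rewrite natrM.
Qed.

End Fin.

Lemma bin2_closed j : 2 * 'C(j, 2) + j = j * j.
Proof. elim: j => [//|j IH]; rewrite binS bin1; nia. Qed.

Lemma pa_closed j : 2 * pa j + j = 3 * (j * j).
Proof. rewrite /pa; have := bin2_closed j; nia. Qed.
Lemma pb_closed j : 2 * pb j = 3 * (j * j) + j.
Proof. rewrite /pb binS bin1; have := bin2_closed j; nia. Qed.

Lemma pc_gap j m : pb j < m <= pb j + 2 * j -> pc m = 0.
Proof.
move=> /andP[h1 h2]; rewrite /pc /pcn.
have hm : (m == 0) = false by apply/negbTE; rewrite -lt0n; exact: leq_ltn_trans (leq0n _) h1.
rewrite hm /=.
have hpa : forall j', pa j' != m.
  move=> j'; apply/eqP => e; have := pa_closed j'; have := pb_closed j.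
  case: (leqP j' j) => h.
  - have : j' * j' <= j * j by apply: leq_mul.
    nia.
  - have : (j.+1) * (j.+1) <= j' * j' by apply: leq_mul.
    nia.
have hpb : forall j', pb j' != m.
  move=> j'; apply/eqP => e; have := pb_closed j'; have := pb_closed j.
  case: (leqP j' j) => h.
  - have : j' * j' <= j * j by apply: leq_mul.
    nia.
  - have : (j.+1) * (j.+1) <= j' * j' by apply: leq_mul.
    nia.
rewrite (eq_count (a2 := pred0)) ?count_pred0; last by move=> j'; rewrite /= (negbTE (hpa j')).
by rewrite (eq_count (a2 := pred0)) ?count_pred0 // => j'; rewrite /= (negbTE (hpb j')).
Qed.

Lemma pc_one j : 0 < j -> pc (pb j) = 1.
Proof.
move=> hj; rewrite /pc /pcn.
have hm : (pb j == 0) = false by apply/negbTE; rewrite -lt0n; exact: leq_trans hj (pb_ge j).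
rewrite hm /=.
have hpa : forall j', pa j' != pb j.
  move=> j'; apply/eqP => e; have := pa_closed j'; have := pb_closed j.
  case: (leqP j' j) => h.
  - have : j' * j' <= j * j by apply: leq_mul.
    nia.
  - have : (j.+1) * (j.+1) <= j' * j' by apply: leq_mul.
    nia.
rewrite (eq_count (a2 := pred0)) ?count_pred0; last by move=> j'; rewrite /= (negbTE (hpa j')).
rewrite (eq_count (a2 := pred1 j)); last first.
  move=> j' /=; apply/eqP/eqP => [e|->] //.
  have := pb_closed j'; have := pb_closed j; rewrite e => h1 h2.
  case: (ltngtP j' j) => h //.
  - have : j' * j' <= j * j by apply: leq_mul; exact: ltnW.
    nia.
  - have : j * j <= j' * j' by apply: leq_mul; exact: ltnW.
    nia.
by rewrite count_uniq_mem ?iota_uniq // mem_iota hj /= add1n ltnS pb_ge.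
Qed.

Lemma sV_closed A a k : 2 * sumn (V A a k) + A * k = 2 * k * a + A * (k * k).
Proof.
elim: k => [|k IH]; first by rewrite /V /= !muln0.
have -> : V A a k.+1 = V A a k ++ [:: a + k * A].
  by rewrite /V -addn1 iotaD map_cat.
rewrite sumn_cat /=; nia.
Qed.

Definition chk3 := all (fun rA => all (fun ra => has (fun i => all (fun rk =>
  (i + rA * rk) %% 3 != (2 * rk * ra + rA * (rk * rk)) %% 3) (iota 0 3)) [:: 1; 2; 3]) (iota 0 3)) [:: 1; 2].
Lemma chk3_ok : chk3. Proof. vm_compute. reflexivity. Qed.

Lemma eqmD x1 y1 x2 y2 : x1 = y1 %[mod 3] -> x2 = y2 %[mod 3] -> x1 + x2 = y1 + y2 %[mod 3].
Proof. by move=> h1 h2; rewrite -modnDm h1 h2 modnDm. Qed.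
Lemma eqmM x1 y1 x2 y2 : x1 = y1 %[mod 3] -> x2 = y2 %[mod 3] -> x1 * x2 = y1 * y2 %[mod 3].
Proof. by move=> h1 h2; rewrite -modnMm h1 h2 modnMm. Qed.
Lemma eqm_mod x : x = x %% 3 %[mod 3].
Proof. by rewrite modn_mod. Qed.

Lemma not_G A a N : A %% 3 != 0 ->
  exists2 i, 0 < i <= 3 & forall k, sumn (V A a k) != pb (N + i) + N.
Proof.
move=> hA3.
have hrA : A %% 3 \in [:: 1; 2].
  have : A %% 3 < 3 by rewrite ltn_pmod.
  by move: hA3; case: (A %% 3) => [|[|[|]]].
have hra : a %% 3 \in iota 0 3 by rewrite mem_iota /= ltn_pmod.
have := chk3_ok; rewrite /chk3 => /allP /(_ _ hrA) /allP /(_ _ hra) /hasP [i hi /allP hk].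
exists i; first by move: hi; rewrite !inE => /or3P[] /eqP ->.
move=> k; apply/negP => /eqP e.
have hrk : k %% 3 \in iota 0 3 by rewrite mem_iota /= ltn_pmod.
move/negP: (hk _ hrk); apply; apply/eqP.
have hL : i + A * k = i + (A %% 3) * (k %% 3) %[mod 3].
  exact: (eqmD (erefl (i %% 3)) (eqmM (eqm_mod A) (eqm_mod k))).
have hR : 2 * k * a + A * (k * k) = 2 * (k %% 3) * (a %% 3) + (A %% 3) * ((k %% 3) * (k %% 3)) %[mod 3].
  exact: (eqmD (eqmM (eqmM (erefl (2 %% 3)) (eqm_mod k)) (eqm_mod a)) (eqmM (eqm_mod A) (eqmM (eqm_mod k) (eqm_mod k)))).
rewrite -hL -hR.
have hs := sV_closed A a k; have hp := pb_closed (N + i).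
have -> : 2 * k * a + A * (k * k) = ((N + i) * (N + i) + N) * 3 + (i + A * k).
  nia.
by rewrite modnMDl.
Qed.

Lemma even_sum (r : seq nat) (P : pred nat) (F : nat -> nat) :
  (forall i, P i -> ~~ odd (F i)) -> ~~ odd (\sum_(i <- r | P i) F i).
Proof.
move=> h; apply: (big_ind (fun x => ~~ odd x)) => // x y hx hy.
by rewrite oddD (negbTE hx) (negbTE hy).
Qed.

Lemma next_odd A a N : 0 < a -> a <= A -> A %% 3 != 0 -> odd (p_mex A a N) ->
  exists N', N < N' <= 16 * (N.+1 * N.+1) /\ odd (p_mex A a N').
Proof.
move=> ha haA hA3 hN.
have [i /andP[hi1 hi3] hG] := not_G a N hA3.
set j := N + i; set t := pb j + N.
have ht : t <= 16 * (N.+1 * N.+1).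
  rewrite /t /j; have := pb_closed (N + i); nia.
case: (boolP (has (fun n => odd (p_mex A a n)) (iota N.+1 (t - N)))) => [/hasP [N' hN' hodd] | hno].
  exists N'; split => //; move: hN'; rewrite mem_iota => /andP[h1 h2].
  have hNt : N <= t by rewrite /t leq_addl.
  apply/andP; split => //; lia.
exfalso.
have := main_odd t ha haA.
have -> : count (fun k => sumn (V A a k) == t) (iota 0 t.+2) = 0.
  apply/eqP; rewrite -leqn0 leqNgt -has_count; apply/hasPn => k _.
  exact: hG.
rewrite (bigD1_seq N) /=; last 2 first.
- by rewrite /index_iota subn0 mem_iota /= ltnS /t leq_addl.
- by rewrite iota_uniq mem_iota.
have htN : t - N = pb j by rewrite /t addnK.
rewrite htN pc_one ?muln1; last by rewrite /j addn_gt0 hi1 orbT.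
rewrite oddD hN.
have -> : odd (\sum_(i0 <- index_iota 0 t.+1 | i0 != N) p_mex A a i0 * pc (t - i0)) = false.
  apply/negbTE; rewrite big_seq_cond; apply: even_sum => i' /andP[hi' hne].
  move: hi'; rewrite mem_iota /= add0n ltnS => hit.
  case: (ltngtP i' N) hne => // h _.
  - rewrite (pc_gap (j := j)) ?muln0 //.
    apply/andP; split; rewrite /t; lia.
  - have hNt : N <= t by rewrite /t leq_addl.
    have hin : i' \in iota N.+1 (t - N) by rewrite mem_iota; apply/andP; split; lia.
    by rewrite oddM; move/hasPn: hno => /(_ i' hin) /negbTE ->.
by [].
Qed.

Definition Cnt A a L := count (fun n => odd (p_mex A a n)) (iota 1 L).

Lemma Cnt_mono A a L L' : L <= L' -> Cnt A a L <= Cnt A a L'.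
Proof.
move=> h; rewrite /Cnt -(subnKC h) iotaD count_cat; exact: leq_addr.
Qed.

Lemma Cnt_step A a L L' : L < L' -> odd (p_mex A a L') -> (Cnt A a L).+1 <= Cnt A a L'.
Proof.
move=> h ho; rewrite /Cnt -(subnKC (ltnW h)) iotaD count_cat -addn1 leq_add2l.
rewrite -has_count; apply/hasP; exists L' => //.
rewrite mem_iota; apply/andP; split; lia.
Qed.

Lemma pm0 A a : 0 < a -> a <= A -> odd (p_mex A a 0).
Proof. by move=> ha haA; rewrite (pmex_sum (K := 1)) // big_ord1. Qed.

Lemma iter_odd A a k : 0 < a -> a <= A -> A %% 3 != 0 ->
  exists N, [/\ odd (p_mex A a N), 32 * N.+1 <= 2 ^ (5 * 2 ^ k) & k <= Cnt A a N].
Proof.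
move=> ha haA hA3; elim: k => [|k [N [h1 h2 h3]]].
  by exists 0; split => //; exact: pm0.
have [N' [/andP[hN1 hN2] hodd]] := next_odd ha haA hA3 h1.
exists N'; split => //.
- have e : 5 * 2 ^ k.+1 = (5 * 2 ^ k) * 2 by rewrite expnS; lia.
  rewrite e expnM expnS expn1.
  have := leq_mul h2 h2; nia.
- rewrite -ltnS in h3; exact: leq_trans h3 (Cnt_step hN1 hodd).
Qed.

Lemma INR_muln (x y : nat) : INR (x * y)%N = Rmult (INR x) (INR y).
Proof. by rewrite -mult_INR multE. Qed.

Lemma INR_expn2 (n : nat) : INR (2 ^ n)%N = pow 2 n.
Proof.
elim: n => [|n IH]; first by rewrite expn0 /=.
by rewrite expnS INR_muln IH /=.
Qed.

Lemma INR_leq (x y : nat) : (x <= y)%N -> Rle (INR x) (INR y).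
Proof. by move/leP; apply: le_INR. Qed.

Lemma floor_ge (N : nat) (X : R) : Rle (INR N) X -> (N <= Z.to_nat (Int_part X))%N.
Proof.
move=> h; apply/leP; have [h1 h2] := archimed X.
have : Rlt (IZR (Z.of_nat N)) (IZR (up X)) by rewrite -INR_IZR_INZ; lra.
move/lt_IZR => h3; rewrite /Int_part; lia.
Qed.

Section RealPart.
Local Open Scope R_scope.

Lemma ln2_pos : 0 < ln 2.
Proof. rewrite -ln_1; apply: ln_increasing; lra. Qed.

Lemma ln2_lt1 : ln 2 < 1.
Proof.
have h := exp_ineq1 1 R1_neq_R0.
rewrite -(ln_exp 1); apply: ln_increasing; lra.
Qed.

Lemma key_real (k : nat) (X : R) : 1 < X -> X < 2 ^ (2 ^ (k + 4))%N -> ln (ln X) < INR (k + 4).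
Proof.
move=> h1 h2.
have hlX : 0 < ln X by rewrite -ln_1; apply: ln_increasing; lra.
have h3 : ln X < INR (2 ^ (k + 4))%N * ln 2.
  rewrite -ln_pow; last lra.
  apply: ln_increasing => //; lra.
rewrite INR_expn2 in h3.
have hp : 0 < 2 ^ (k + 4) by apply: pow_lt; lra.
have h4 : ln (ln X) < ln (2 ^ (k + 4) * ln 2).
  apply: ln_increasing => //.
rewrite ln_mult // in h4; last exact: ln2_pos.
rewrite ln_pow in h4; last lra.
have h5 : ln (ln 2) < 0 by rewrite -ln_1; apply: ln_increasing; [exact: ln2_pos|exact: ln2_lt1].
have h6 : 0 <= INR (k + 4) by apply: pos_INR.
have := ln2_lt1; have := ln2_pos; nra.
Qed.

Lemma final_bound (f : R -> nat) :
  (forall k X, INR (2 ^ (2 ^ (k + 3)))%N <= X -> (k <= f X)%N) ->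
  forall X, INR (2 ^ (2 ^ 4))%N <= X -> (1 / 8) * ln (ln X) <= INR (f X).
Proof.
move=> hf.
have main : forall m X, INR (2 ^ (2 ^ 4))%N <= X -> X < INR (2 ^ (2 ^ (m + 3)))%N ->
    (1 / 8) * ln (ln X) <= INR (f X).
  elim=> [|m IH] X hX hXm.
    have : INR (2 ^ (2 ^ (0 + 3)))%N <= INR (2 ^ (2 ^ 4))%N.
      by apply: INR_leq; rewrite leq_exp2l // leq_exp2l.
    lra.
  case: (Rlt_le_dec X (INR (2 ^ (2 ^ (m + 3)))%N)) => hc; first exact: IH.
  have hm := hf m X hc.
  case: m IH hc hm hXm => [|m] IH hc hm hXm.
    have e : (0.+1 + 3 = 4)%N by [].
    by rewrite e in hXm; lra.
  have hX1 : 1 < X.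
    have : INR 1 < INR (2 ^ (2 ^ 4))%N.
      by apply: lt_INR; apply/ltP; rewrite -[1%N](expn0 2) ltn_exp2l // expn_gt0.
    rewrite [INR 1]/= => h; lra.
  have hk := @key_real m.+1 X hX1.
  have : ln (ln X) < INR (m.+1 + 4).
    apply: hk; move: hXm; rewrite INR_expn2.
    by rewrite (_ : (m.+1.+1 + 3 = m.+1 + 4)%N) //; lia.
  have : INR m.+1 <= INR (f X) by apply: INR_leq.
  rewrite plus_INR S_INR /=.
  have := pos_INR m; lra.
move=> X hX.
have [h1 h2] := archimed X.
set M := Z.to_nat (up X).
apply: (main M) => //.
have hM : X < INR M.
  rewrite /M INR_IZR_INZ Z2Nat.id //.
  apply: le_IZR; apply: Rle_trans (Rlt_le _ _ h1).
  apply: Rle_trans hX; apply: pos_INR.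
apply: Rlt_le_trans hM _; apply: INR_leq.
apply: leq_trans (ltnW (ltn_expl M (isT : 1 < 2)%N)) _.
rewrite leq_exp2l //; apply: ltnW; apply: leq_trans (ltn_expl M (isT : 1 < 2)%N) _.
by rewrite leq_exp2l // leq_addr.
Qed.

End RealPart.

Unset Implicit Arguments.

Theorem theorem1p2 (m p : nat) :
  0 < m -> prime p -> m %% 3 != 0 -> p %% 3 = 1 ->
  exists beta : R, Rlt 0 beta /\
    exists X0 : R, forall X : R, Rle X0 X ->
      Rle (Rmult beta (ln (ln X))) (INR (odd_count (m * p) p X)).
Proof.
move=> hm hp hm3 hp3.
have ha : 0 < p := prime_gt0 hp.
have haA : p <= m * p := leq_pmull p hm.
have hA3 : (m * p) %% 3 != 0 by rewrite -modnMm hp3 muln1 modn_mod.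
exists (Rdiv 1 8); split; first lra.
exists (INR (2 ^ (2 ^ 4))); move=> X hX.
apply: (final_bound (f := fun X => odd_count (m * p) p X)) => // k Y hY.
have [N [h1 h2 h3]] := @iter_odd (m * p) p k ha haA hA3.
apply: leq_trans h3 _.
apply: Cnt_mono; apply: floor_ge.
apply: Rle_trans hY; apply: INR_leq.
have h5 : 5 * 2 ^ k <= 2 ^ (k + 3) by rewrite expnD; lia.
have h6 : 2 ^ (5 * 2 ^ k) <= 2 ^ (2 ^ (k + 3)) by rewrite leq_exp2l.
lia.
Qed.
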